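(* Let $K$ be an idempotent, linearly ordered, archimedian, cancellative, commutative semiring. Let $u,q\in K$, $S=u(qX)^*$, let $r\geq1$, $u_1,\dots,u_r,q_1,\dots,q_r\in K$, $T_i=u_i(q_iX)^*$ and $T=\bigoplus_{1\leq i\leq r}T_i$. Then $T=S$ if and only if $T_i\leq S$ for all $1\leq i\leq r$ and $T_j=S$ for some $1\leq j\leq r$.
   Context: Semiring notions: idempotent ($u\oplus u=u$), linearly ordered ($u\leq v\iff u\oplus v=v$ is a total order), archimedian (for all $u,v,\lambda,\mu$: $u\lambda^k\geq v\mu^k$ for all $k\ge0$ implies $v=\mathbb{0}$ or $\lambda\geq\mu$), cancellative ($uv=u'v$ implies $v=\mathbb{0}$ or $u=u'$). For $a\in K$, $(aX)^*=\bigoplus_{k\ge0}a^kX^k\in K[[X]]$; series are added coefficientwise and ordered coefficientwise ($S\leq T$ iff $S\oplus T=T$). *)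

(* Defs.v *)
From HB Require Import structures.
From mathcomp Require Import all_boot all_order all_algebra.
Set Implicit Arguments. Unset Strict Implicit. Unset Printing Implicit Defensive.
Import GRing.Theory.
Local Open Scope ring_scope.

Section SemiringDefs.
Variable K : comPzSemiRingType.

Definition sr_le (u v : K) : Prop := u + v = v.

Definition sr_idempotent : Prop := forall u : K, u + u = u.

Definition sr_linearly_ordered : Prop :=
  [/\ (forall u : K, sr_le u u),
      (forall u v : K, sr_le u v -> sr_le v u -> u = v),
      (forall u v w : K, sr_le u v -> sr_le v w -> sr_le u w)
    & (forall u v : K, sr_le u v \/ sr_le v u)].

Definition sr_archimedean : Prop :=
  forall u v lam mu : K,
    (forall k : nat, sr_le (v * mu ^+ k) (u * lam ^+ k)) ->
    v = 0 \/ sr_le mu lam.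

Definition sr_cancellative : Prop :=
  forall u u' v : K, u * v = u' * v -> v = 0 \/ u = u'.

(* formal power series K[[X]] as coefficient sequences *)
Definition series := nat -> K.

Definition ser0 : series := fun _ => 0.
Definition ser_add (S T : series) : series := fun k => S k + T k.
Definition ser_le (S T : series) : Prop := forall k, S k + T k = T k.
(* u (qX)^* = sum_k u q^k X^k *)
Definition ser_ustar (u q : K) : series := fun k => u * q ^+ k.

End SemiringDefs.

(* Main.v *)
Require Import Defs.
From HB Require Import structures.
From mathcomp Require Import all_boot all_order all_algebra.
From Stdlib Require Import Classical FunctionalExtensionality.
Import GRing.Theory.
Local Open Scope ring_scope.

Section Aux.
Set Implicit Arguments.
Variable K : comPzSemiRingType.
Hypothesis Hid : sr_idempotent K.
Hypothesis Hlin : sr_linearly_ordered K.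
Hypothesis Hcan : sr_cancellative K.

Lemma le_trans (a b c : K) : sr_le a b -> sr_le b c -> sr_le a c.
Proof. rewrite /sr_le => h1 h2. by rewrite -h2 addrA h1. Qed.

Lemma le_addr (a b : K) : sr_le a (a + b).
Proof. by rewrite /sr_le addrA Hid. Qed.

Lemma le_mulr (a b c : K) : sr_le a b -> sr_le (a * c) (b * c).
Proof. rewrite /sr_le => h. by rewrite -mulrDl h. Qed.

Lemma le_mull (a b c : K) : sr_le a b -> sr_le (c * a) (c * b).
Proof. rewrite ![c * _]mulrC. exact: le_mulr. Qed.

Lemma le_mul (a b c d : K) : sr_le a b -> sr_le c d -> sr_le (a * c) (b * d).
Proof. move=> h1 h2; apply: (le_trans (le_mulr c h1)); exact: le_mull. Qed.

Lemma le_exp (a b : K) k : sr_le a b -> sr_le (a ^+ k) (b ^+ k).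
Proof.
move=> h; elim: k => [|k IH]; first by rewrite !expr0 /sr_le Hid.
rewrite !exprSr; exact: le_mul.
Qed.

Lemma le_antisym (a b : K) : sr_le a b -> sr_le b a -> a = b.
Proof. rewrite /sr_le => h1 h2. by rewrite -h1 -{1}h2 addrC. Qed.

Lemma add_cases (a b : K) : a + b = a \/ a + b = b.
Proof.
case: Hlin => _ _ _ /(_ a b) [h|h]; [right; exact h|left; by rewrite addrC].
Qed.

Lemma sum_bound (I : finType) (P : pred I) (F : I -> K) c :
  (forall i, P i -> sr_le (F i) c) -> sr_le (\sum_(i | P i) F i) c.
Proof.
move=> h; apply: (big_rec (fun x => sr_le x c)); first by rewrite /sr_le add0r.
move=> i x Pi hx; rewrite /sr_le -addrA hx; exact: h.
Qed.

Lemma sum_term (I : finType) (P : pred I) (F : I -> K) j :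
  P j -> sr_le (F j) (\sum_(i | P i) F i).
Proof. move=> Pj; rewrite (bigD1 j) //=; exact: le_addr. Qed.

Lemma sum_one (I : finType) (P : pred I) (F : I -> K) :
  \sum_(i | P i) F i = 0 \/ exists j, P j /\ \sum_(i | P i) F i = F j.
Proof.
apply: (big_rec (fun x => x = 0 \/ exists j, P j /\ x = F j)); first by left.
move=> i x Pi [->|[j [Pj ->]]]; right.
  by exists i; rewrite addr0.
case: (add_cases (F i) (F j)) => ->; [exists i|exists j]; by [].
Qed.

Lemma integral (a b : K) : a * b = 0 -> a = 0 \/ b = 0.
Proof.
move=> h; have: a * b = 0 * b by rewrite mul0r.
case/Hcan => ->; [right|left]; by [].
Qed.

Lemma expf_neq0' (q : K) k : q != 0 -> q ^+ k != 0.
Proof.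
move=> /eqP hq; apply/eqP; elim: k => [|k IH].
  rewrite expr0 => h1; apply: hq; by rewrite -(mulr1 q) h1 mulr0.
rewrite exprSr => /integral [] //.
Qed.

End Aux.

Lemma sum_eval (K : comPzSemiRingType) r (T : 'I_r -> series K) k :
  (\big[@ser_add K/ser0 K]_(i < r) T i) k = \sum_(i < r) T i k.
Proof.
exact: (big_morph (fun S : series K => S k) (id1 := 0) (op1 := +%R)).
Qed.

Theorem lemma7 (K : comPzSemiRingType)
  (Hid : sr_idempotent K) (Hlin : sr_linearly_ordered K)
  (Harch : sr_archimedean K) (Hcan : sr_cancellative K)
  (u q : K) (r : nat) (Hr : (1 <= r)%N) (us qs : 'I_r -> K) :
  let S := ser_ustar u q in
  let T := fun i : 'I_r => ser_ustar (us i) (qs i) in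
  (\big[@ser_add K/ser0 K]_(i < r) T i = S) <->
  ((forall i : 'I_r, ser_le (T i) S) /\ (exists j : 'I_r, T j = S)).
Proof.
move=> S T; split.
- move=> H.
  have Hk : forall k, \sum_(i < r) T i k = u * q ^+ k.
    by move=> k; rewrite -sum_eval H.
  have H1 : forall i, ser_le (T i) S.
    move=> i k; rewrite /S /ser_ustar -Hk.
    exact: (@sum_term K Hid _ predT (fun j => T j k) i isT).
  split => //.
  have Hu : forall i, sr_le (us i) u.
    move=> i; have := H1 i 0%N; by rewrite /T /S /ser_ustar !expr0 !mulr1.
  case: (eqVneq u 0) => [u0|un0].
    exists (Ordinal Hr); apply: functional_extensionality => k.
    have := H1 (Ordinal Hr) k; rewrite /S /ser_ustar u0 mul0r addr0 => ->.
    by [].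
  case: (eqVneq q 0) => [q0|qn0].
    have := @sum_one K Hlin _ predT (fun i => T i 0%N).
    rewrite Hk expr0 mulr1 => [] [u0|[i [_ ui]]]; first by rewrite u0 eqxx in un0.
    exists i; apply: functional_extensionality => k.
    case: k => [|k]; first by move: ui => /= ui; rewrite /S /ser_ustar expr0 mulr1 ui.
    have := H1 i k.+1; rewrite /S /ser_ustar q0 exprSr !mulr0 addr0 => ->.
    by [].
  apply: NNPP => Hno.
  have Hno' : forall j, T j <> S by move=> j hj; apply: Hno; exists j.
  pose Q := \sum_(i < r | (us i != 0) && (qs i != q)) qs i.
  have HQ : forall k, sr_le (u * q ^+ k) (u * Q ^+ k).
    move=> k.
    have hqk := @expf_neq0' K Hcan q k qn0.
    have := @sum_one K Hlin _ predT (fun i => T i k).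
    rewrite Hk => [] [h0|[i [_ hi]]].
      case/(integral Hcan): h0 => h0; [by rewrite h0 eqxx in un0|by rewrite h0 eqxx in hqk].
    rewrite hi /T /ser_ustar.
    case: (eqVneq (us i) 0) => [ui0|uin0].
      move: hi; rewrite /T /ser_ustar ui0 mul0r => /(integral Hcan) [] h0.
        by rewrite h0 eqxx in un0.
      by rewrite h0 eqxx in hqk.
    case: (eqVneq (qs i) q) => [qi|qin].
      exfalso; move: hi; rewrite /T /ser_ustar qi => hi.
      case: (Hcan _ _ _ hi) => [h0|ue]; first by rewrite h0 eqxx in hqk.
      apply: (Hno' i); rewrite /T /S ue qi; by [].
    apply: le_mul; first exact: Hu.
    apply: (le_exp Hid).
    by apply: (@sum_term K Hid _ (fun i => (us i != 0) && (qs i != q)) qs i); rewrite uin0 qin.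
  case: (Harch u u Q q HQ) => [u0|hqQ]; first by rewrite u0 eqxx in un0.
  case: (@sum_one K Hlin _ (fun i => (us i != 0) && (qs i != q)) qs) => [Q0|[j [/andP [uj0 qjn] Qj]]].
    move: hqQ; rewrite /sr_le /Q Q0 addr0 => q0; by rewrite q0 eqxx in qn0.
  have hjq : sr_le (qs j) q.
    case: (Harch u (us j) q (qs j)) => //; last by move=> h; rewrite h eqxx in uj0.
    move=> k; exact: (H1 j k).
  have : q = qs j by apply: le_antisym => //; rewrite -Qj.
  by move=> e; rewrite e eqxx in qjn.
- move=> [H1 [j Hj]]; apply: functional_extensionality => k.
  rewrite sum_eval (bigD1 j) //= Hj.
  have hb : sr_le (\sum_(i < r | i != j) T i k) (S k).
    by apply: sum_bound => i _; apply: H1.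
  by rewrite addrC hb.
Qed.
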